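(* Let $\tau$ be a continuous distributive triangle function on $\Delta^+$, $\Sigma$ a $\sigma$-ring of subsets of $\Omega\ne\emptyset$, $\gamma$ a $\tau$-decomposable measure on $\Sigma$ continuous from below, and $f$ a simple function. If $E_n\in\Sigma$, $E_n\subseteq E_{n+1}$ for all $n$ and $\bigcup_n E_n=E$, then $\lim_{n\to\infty}\int_{E_n} f\,d\gamma=\int_E f\,d\gamma$ (weak limit).
   Context: $\Delta^+$: functions $F:[-\infty,+\infty]\to[0,1]$ non-decreasing, left-continuous on $\mathbb{R}$, $F(x)=0$ for $x\le0$, $F(+\infty)=1$; $\varepsilon_a(x)=1$ if $x>a$, else $0$. Triangle function: symmetric, associative $\tau:\Delta^+\times\Delta^+\to\Delta^+$, non-decreasing in each variable, identity $\varepsilon_0$; $G\oplus H=\tau(G,H)$, $\bigoplus_{k=1}^nG_k=\tau(G_1,\bigoplus_{k=2}^nG_k)$. $c\odot G=\varepsilon_0$ if $c=0$, $(c\odot G)(x)=G(x/c)$ if $c>0$; $\tau$ distributive if $c\odot(G\oplus H)=(c\odot G)\oplus(c\odot H)$ for all $c\ge0$. Convergence in $\Delta^+$ is weak convergence ($G_n(x)\to G(x)$ at every continuity point $x\in\mathbb{R}$ of $G$); $\tau$ continuous if continuous for it. $\tau$-decomposable measure on a ring $\Sigma$: $\gamma:\Sigma\to\Delta^+$, $\gamma_\emptyset=\varepsilon_0$, $\gamma_{E\cup F}=\tau(\gamma_E,\gamma_F)$ for disjoint $E,F$; continuous from below: $\gamma_{E_n}\to\gamma_E$ whenever $E_n\subseteq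 E_{n+1}$, $\bigcup E_n=E$ in $\Sigma$. A simple function is $f=\sum_{i=1}^mx_i\chi_{G_i}$ with $x_i\in[0,\infty)$, $G_i\in\Sigma$ pairwise disjoint, and $\int_Ef\,d\gamma=\bigoplus_{i=1}^mx_i\odot\gamma_{E\cap G_i}$. *)

(* Defs.v *)
From Stdlib Require Export Reals List.
Import ListNotations.
Open Scope R_scope.

(* Elements of Delta^+ are represented by their restriction to R :
   F(-oo) = 0 and F(+oo) = 1 are fixed by definition, so the restriction
   determines F. *)
Definition left_cont_at (F : R -> R) (x : R) : Prop :=
  forall e, 0 < e -> exists d, 0 < d /\
    forall y, x - d < y < x -> Rabs (F y - F x) < e.

Definition in_Dplus (F : R -> R) : Prop :=
  (forall x y, x <= y -> F x <= F y) /\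
  (forall x, 0 <= F x <= 1) /\
  (forall x, left_cont_at F x) /\
  (forall x, x <= 0 -> F x = 0).

Definition eps (a : R) : R -> R := fun x => if Rlt_dec a x then 1 else 0.

(* c (.) G, meaningful for c >= 0 *)
Definition smul (c : R) (G : R -> R) : R -> R :=
  if Req_EM_T c 0 then eps 0 else fun x => G (x / c).

Definition cont_point (G : R -> R) (x : R) : Prop :=
  forall e, 0 < e -> exists d, 0 < d /\
    forall y, Rabs (y - x) < d -> Rabs (G y - G x) < e.

Definition wconv (Gn : nat -> R -> R) (G : R -> R) : Prop :=
  forall x, cont_point G x -> Un_cv (fun n => Gn n x) (G x).

Definition pw_le (G H : R -> R) : Prop := forall x, G x <= H x.

Definition triangle_function (tau : (R -> R) -> (R -> R) -> (R -> R)) : Prop :=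
  (forall G H, in_Dplus G -> in_Dplus H -> in_Dplus (tau G H)) /\
  (forall G H, in_Dplus G -> in_Dplus H -> tau G H = tau H G) /\
  (forall G H K, in_Dplus G -> in_Dplus H -> in_Dplus K ->
     tau G (tau H K) = tau (tau G H) K) /\
  (forall G G' H, in_Dplus G -> in_Dplus G' -> in_Dplus H ->
     pw_le G G' -> pw_le (tau G H) (tau G' H)) /\
  (forall G H H', in_Dplus G -> in_Dplus H -> in_Dplus H' ->
     pw_le H H' -> pw_le (tau G H) (tau G H')) /\
  (forall G, in_Dplus G -> tau G (eps 0) = G).

Definition tau_distributive (tau : (R -> R) -> (R -> R) -> (R -> R)) : Prop :=
  forall c G H, 0 <= c -> in_Dplus G -> in_Dplus H ->
    smul c (tau G H) = tau (smul c G) (smul c H).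

Definition tau_continuous (tau : (R -> R) -> (R -> R) -> (R -> R)) : Prop :=
  forall (Gn Hn : nat -> R -> R) G H,
    (forall n, in_Dplus (Gn n)) -> (forall n, in_Dplus (Hn n)) ->
    in_Dplus G -> in_Dplus H ->
    wconv Gn G -> wconv Hn H -> wconv (fun n => tau (Gn n) (Hn n)) (tau G H).

Definition sempty {Omega : Type} : Omega -> Prop := fun _ => False.
Definition sunion {Omega : Type} (A B : Omega -> Prop) : Omega -> Prop :=
  fun w => A w \/ B w.
Definition sinter {Omega : Type} (A B : Omega -> Prop) : Omega -> Prop :=
  fun w => A w /\ B w.
Definition sdiff {Omega : Type} (A B : Omega -> Prop) : Omega -> Prop :=
  fun w => A w /\ ~ B w.
Definition sbigcup {Omega : Type} (A : nat -> Omega -> Prop) : Omega -> Prop :=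
  fun w => exists n, A n w.
Definition ssubset {Omega : Type} (A B : Omega -> Prop) : Prop :=
  forall w, A w -> B w.
Definition sdisjoint {Omega : Type} (A B : Omega -> Prop) : Prop :=
  forall w, A w -> B w -> False.

Definition sigma_ring {Omega : Type} (Sigma : (Omega -> Prop) -> Prop) : Prop :=
  Sigma sempty /\
  (forall A B, Sigma A -> Sigma B -> Sigma (sdiff A B)) /\
  (forall A : nat -> Omega -> Prop, (forall n, Sigma (A n)) -> Sigma (sbigcup A)).

Definition tau_decomposable {Omega : Type} (tau : (R -> R) -> (R -> R) -> (R -> R))
  (Sigma : (Omega -> Prop) -> Prop) (gamma : (Omega -> Prop) -> R -> R) : Prop :=
  (forall E, Sigma E -> in_Dplus (gamma E)) /\
  gamma sempty = eps 0 /\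
  (forall E F, Sigma E -> Sigma F -> sdisjoint E F ->
     gamma (sunion E F) = tau (gamma E) (gamma F)).

Definition cont_from_below {Omega : Type}
  (Sigma : (Omega -> Prop) -> Prop) (gamma : (Omega -> Prop) -> R -> R) : Prop :=
  forall (En : nat -> Omega -> Prop) E,
    (forall n, Sigma (En n)) -> Sigma E ->
    (forall n, ssubset (En n) (En (S n))) -> sbigcup En = E ->
    wconv (fun n => gamma (En n)) (gamma E).

Fixpoint bigtau (tau : (R -> R) -> (R -> R) -> (R -> R)) (l : list (R -> R)) : R -> R :=
  match l with
  | nil => eps 0
  | G :: nil => G
  | G :: t => tau G (bigtau tau t)
  end.

(* A simple function f = sum_i x_i chi_{G_i} is given by its list of pairs (x_i, G_i). *)
Definition simple_repr {Omega : Type} (Sigma : (Omega -> Prop) -> Prop)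
  (f : list (R * (Omega -> Prop))) : Prop :=
  (forall p, List.In p f -> 0 <= fst p /\ Sigma (snd p)) /\
  (forall i j, (i < length f)%nat -> (j < length f)%nat -> i <> j ->
     sdisjoint (snd (List.nth i f (0, sempty))) (snd (List.nth j f (0, sempty)))).

Definition sintegral {Omega : Type} (tau : (R -> R) -> (R -> R) -> (R -> R))
  (gamma : (Omega -> Prop) -> R -> R) (f : list (R * (Omega -> Prop)))
  (E : Omega -> Prop) : R -> R :=
  bigtau tau (List.map (fun p => smul (fst p) (gamma (sinter E (snd p)))) f).

(* Main.v *)
Require Import Defs.
From Stdlib Require Import Classical FunctionalExtensionality PropExtensionality Lra.

Lemma set_ext {Omega : Type} (A B : Omega -> Prop) :
  (forall w, A w <-> B w) -> A = B.
Proof.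
  intros H; apply functional_extensionality; intros w;
  apply propositional_extensionality; apply H.
Qed.

Lemma eps0_Dplus : in_Dplus (eps 0).
Proof.
  unfold in_Dplus, eps; repeat split.
  - intros x y Hxy; destruct (Rlt_dec 0 x); destruct (Rlt_dec 0 y); lra.
  - destruct (Rlt_dec 0 x); lra.
  - destruct (Rlt_dec 0 x); lra.
  - intros x e He. destruct (Rlt_dec 0 x) as [Hx|Hx].
    + exists x; split; [lra|]. intros y Hy.
      destruct (Rlt_dec 0 y); [|lra]. rewrite Rminus_diag, Rabs_R0; lra.
    + exists 1; split; [lra|]. intros y Hy.
      destruct (Rlt_dec 0 y); [lra|]. rewrite Rminus_diag, Rabs_R0; lra.
  - intros x Hx. destruct (Rlt_dec 0 x); lra.
Qed.

Lemma smul_Dplus c G : 0 <= c -> in_Dplus G -> in_Dplus (smul c G).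
Proof.
  intros Hc [H1 [H2 [H3 H4]]]. unfold smul.
  destruct (Req_EM_T c 0) as [E|E]; [apply eps0_Dplus|].
  assert (Hc' : 0 < c) by lra.
  repeat split.
  - intros x y Hxy. apply H1. unfold Rdiv.
    apply Rmult_le_compat_r; [left; apply Rinv_0_lt_compat; lra|lra].
  - apply H2.
  - apply H2.
  - intros x e He. destruct (H3 (x / c) e He) as [d [Hd Hy]].
    exists (d * c); split; [nra|]. intros y Hy'. apply Hy.
    assert (Ex : x = x / c * c) by (field; lra).
    assert (Ey : y = y / c * c) by (field; lra).
    set (u := x / c) in *. set (v := y / c) in *.
    rewrite Ex, Ey in Hy'. split; nra.
  - intros x Hx. apply H4. assert (Ex : x = x / c * c) by (field; lra).
    set (u := x / c) in *. nra.
Qed.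

Lemma Un_cv_const a : Un_cv (fun _ => a) a.
Proof.
  intros e He. exists 0%nat. intros n _. unfold R_dist.
  rewrite Rminus_diag, Rabs_R0; lra.
Qed.

Lemma smul_wconv c Gn G : 0 <= c -> wconv Gn G ->
  wconv (fun n => smul c (Gn n)) (smul c G).
Proof.
  intros Hc HW x Hx. unfold smul in *.
  destruct (Req_EM_T c 0) as [E|E]; [apply Un_cv_const|].
  assert (Hc' : 0 < c) by lra.
  apply HW. intros e He. destruct (Hx e He) as [d [Hd Hy]].
  exists (d / c); split; [apply Rdiv_lt_0_compat; lra|].
  intros y Hy'. specialize (Hy (y * c)).
  replace (y * c / c) with y in Hy by (field; lra).
  apply Hy. replace (y * c - x) with ((y - x / c) * c) by (field; lra).
  rewrite Rabs_mult, (Rabs_right c) by lra.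
  apply (Rmult_lt_reg_r (/ c)); [apply Rinv_0_lt_compat; lra|].
  rewrite Rmult_assoc, Rinv_r, Rmult_1_r by lra. exact Hy'.
Qed.

Lemma bigtau_Dplus tau (l : list (R -> R)) :
  triangle_function tau -> (forall G, In G l -> in_Dplus G) -> in_Dplus (bigtau tau l).
Proof.
  intros Ht. induction l as [|G t IH]; intros Hl.
  - apply eps0_Dplus.
  - destruct t as [|G' t'].
    + apply Hl; left; auto.
    + change (in_Dplus (tau G (bigtau tau (G' :: t')))).
      apply (proj1 Ht). apply Hl; left; auto.
      apply IH. intros K HK; apply Hl; right; auto.
Qed.

Lemma bigtau_wconv {X : Type} tau (F : nat -> X -> R -> R) (H : X -> R -> R) (l : list X) :
  triangle_function tau -> tau_continuous tau ->
  (forall p n, In p l -> in_Dplus (F n p)) -> (forall p, In p l -> in_Dplus (H p)) ->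
  (forall p, In p l -> wconv (fun n => F n p) (H p)) ->
  wconv (fun n => bigtau tau (map (F n) l)) (bigtau tau (map H l)).
Proof.
  intros Ht Hc. induction l as [|p t IH]; intros HF HH HW.
  - intros x _. simpl. apply Un_cv_const.
  - destruct t as [|q t'].
    + simpl. apply HW; left; auto.
    + change (wconv (fun n => tau (F n p) (bigtau tau (map (F n) (q :: t'))))
                    (tau (H p) (bigtau tau (map H (q :: t'))))).
      apply Hc.
      * intros n; apply HF; left; auto.
      * intros n; apply bigtau_Dplus; auto. intros G HG.
        apply in_map_iff in HG. destruct HG as [r [<- Hr]]. apply HF; right; auto.
      * apply HH; left; auto.
      * apply bigtau_Dplus; auto. intros G HG.
        apply in_map_iff in HG. destruct HG as [r [<- Hr]]. apply HH; right; auto.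
      * apply HW; left; auto.
      * apply IH; intros; [apply HF|apply HH|apply HW]; right; auto.
Qed.

Lemma sigma_inter {Omega : Type} (Sigma : (Omega -> Prop) -> Prop) A B :
  sigma_ring Sigma -> Sigma A -> Sigma B -> Sigma (sinter A B).
Proof.
  intros [_ [Hd _]] HA HB.
  replace (sinter A B) with (sdiff A (sdiff A B)).
  - apply Hd; auto.
  - apply set_ext. intros w; unfold sdiff, sinter. split.
    + intros [Ha Hn]. split; auto. apply NNPP. intros Hb; apply Hn; auto.
    + intros [Ha Hb]. split; auto. intros [_ Hn]; auto.
Qed.

Theorem lemma5p1 (tau : (R -> R) -> (R -> R) -> (R -> R))
  (Omega : Type) (Sigma : (Omega -> Prop) -> Prop)
  (gamma : (Omega -> Prop) -> R -> R) (f : list (R * (Omega -> Prop)))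
  (En : nat -> Omega -> Prop) (E : Omega -> Prop) :
  triangle_function tau -> tau_continuous tau -> tau_distributive tau ->
  inhabited Omega -> sigma_ring Sigma ->
  tau_decomposable tau Sigma gamma -> cont_from_below Sigma gamma ->
  simple_repr Sigma f ->
  (forall n, Sigma (En n)) -> (forall n, ssubset (En n) (En (S n))) ->
  sbigcup En = E ->
  wconv (fun n => sintegral tau gamma f (En n)) (sintegral tau gamma f E).
Proof.
  intros Ht Hc _ _ Hs Hdec Hcb [Hf _] HEn Hinc HE.
  assert (HSE : Sigma E) by (rewrite <- HE; apply Hs; auto).
  unfold sintegral.
  apply (bigtau_wconv tau (fun n p => smul (fst p) (gamma (sinter (En n) (snd p))))
           (fun p => smul (fst p) (gamma (sinter E (snd p))))); auto.
  - intros p n Hp. destruct (Hf p Hp). apply smul_Dplus; auto.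
    apply (proj1 Hdec). apply sigma_inter; auto.
  - intros p Hp. destruct (Hf p Hp). apply smul_Dplus; auto.
    apply (proj1 Hdec). apply sigma_inter; auto.
  - intros p Hp. destruct (Hf p Hp). apply smul_wconv; auto.
    apply Hcb.
    + intros n; apply sigma_inter; auto.
    + apply sigma_inter; auto.
    + intros n w [H1 H2]; split; auto. apply Hinc; auto.
    + rewrite <- HE. apply set_ext. intros w; unfold sbigcup, sinter; firstorder.
Qed.
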